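(* Let $X$ be a compact metric space and $f\colon X\to X$ continuous. Suppose there is a full orbit $\bar x=(x_i)_{i\in\mathbb Z}$ (i.e. $f(x_i)=x_{i+1}$ for all $i\in\mathbb Z$) such that $x_0\notin\lambda(\bar x)$. Then $\mathrm{Per}(\bar x)=\mathbb N$, and consequently $\mathrm{Per}(2^f)=\mathbb N$.
   Context: $2^X$ is the space of nonempty closed subsets of $X$ with the Hausdorff metric, and $2^f(C)=f(C)$. A full orbit of $x$ is a sequence $\bar x=(x_i)_{i\in\mathbb Z}$ in $X$ with $x_0=x$ and $f(x_i)=x_{i+1}$ for all $i$. Its limit set is $\lambda(\bar x)=\alpha(\bar x)\cup\omega(\bar x)=\bigcap_{m\ge 0}\overline{\bigcup_{n\ge m}\{x_{-n},x_n\}}$. For a full orbit $\bar x$, $\mathrm{Per}(\bar x)$ is the set of $k\in\mathbb N$ such that $\overline{\{x_{mk}:m\in\mathbb Z\}}\in 2^X$ is a periodic point of $2^f$ with fundamental period $k$. $\mathrm{Per}(2^f)$ is the set of fundamental periods of periodic points of $2^f$. *)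

(* Defs.v *)
From HB Require Import structures.
From mathcomp Require Import all_boot all_order all_algebra.
From mathcomp Require Import all_classical all_reals all_analysis.
Set Implicit Arguments. Unset Strict Implicit. Unset Printing Implicit Defensive.
Import Order.TTheory GRing.Theory Num.Theory.
Local Open Scope classical_set_scope.
Local Open Scope ring_scope.

Definition full_orbit {X : Type} (f : X -> X) (x : int -> X) : Prop :=
  forall i : int, f (x i) = x (i + 1).

Definition limit_set {X : topologicalType} (x : int -> X) : set X :=
  \bigcap_(m in [set: nat])
    closure [set y | exists n : nat, (m <= n)%N /\
                     (y = x (n%:Z) \/ y = x (- (n%:Z)))].

Definition hyper_map {X : Type} (f : X -> X) (C : set X) : set X := f @` C.

Definition hyper_periodic {X : topologicalType} (f : X -> X) (C : set X)
    (k : nat) : Prop :=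
  [/\ closed C, C !=set0, (0 < k)%N,
      iter k (hyper_map f) C = C &
      forall j : nat, (0 < j)%N -> (j < k)%N -> iter j (hyper_map f) C <> C].

Definition sub_orbit_closure {X : topologicalType} (x : int -> X) (k : nat)
  : set X := closure [set x (m * k%:Z) | m in [set: int]].

Definition Per_orbit {X : topologicalType} (f : X -> X) (x : int -> X)
  : set nat := [set k | hyper_periodic f (sub_orbit_closure x k) k].

Definition Per_hyper {X : topologicalType} (f : X -> X) : set nat :=
  [set k | exists C : set X, hyper_periodic f C k].

(* N = positive naturals *)
Definition posnat : set nat := [set k | (0 < k)%N].

(* Main.v *)
Require Import Defs.
From HB Require Import structures.
From mathcomp Require Import all_boot all_order all_algebra.
From mathcomp Require Import all_classical all_reals all_analysis.
From mathcomp Require Import zify.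
Import Order.TTheory GRing.Theory Num.Theory.
Local Open Scope classical_set_scope.
Local Open Scope ring_scope.

Section Aux.
Variables (T : topologicalType).

Lemma iterH (f : T -> T) n C : iter n (hyper_map f) C = iter n f @` C.
Proof.
elim: n => [|n IH] /=; first by rewrite image_id.
by rewrite IH /hyper_map image_comp.
Qed.

Lemma iter_cont (f : T -> T) n : continuous f -> continuous (iter n f).
Proof.
move=> fc; elim: n => [|n IH] /= x; first exact: cvg_id.
exact: (@continuous_comp _ _ _ (iter n f) f x (IH x) (fc _)).
Qed.

Lemma img_closure (g : T -> T) A : continuous g ->
  g @` closure A `<=` closure (g @` A).
Proof.
move=> gc _ [p Ap <-] B /gc gB.
have [q [Aq Bq]] := Ap _ gB.
by exists (g q); split => //; exists q.
Qed.

Lemma img_closure_eq (g : T -> T) A : compact [set: T] -> hausdorff_space T ->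
  continuous g -> g @` closure A = closure (g @` A).
Proof.
move=> cT hT gc; apply/seteqP; split; first exact: img_closure.
have cl : closed (g @` closure A).
  apply: compact_closed => //; apply: continuous_compact.
    exact: continuous_subspaceT.
  apply: subclosed_compact cT _ => //; exact: closed_closure.
rewrite [X in _ `<=` X](closure_id _).1 //; apply: closureS.
by move=> _ [a Aa <-]; exists a => //; exact: subset_closure.
Qed.

End Aux.

Section Orbit.
Variables (T : topologicalType) (f : T -> T) (x : int -> T).
Hypothesis fo : full_orbit f x.

Lemma orbit_iter n i : iter n f (x i) = x (i + n%:Z).
Proof.
elim: n => [|n IH] /=; first by rewrite addr0.
by rewrite IH fo; congr x; lia.
Qed.

Definition Aset (n : nat) : set T := [set y | exists n' : nat, (n <= n')%N /\
                     (y = x (n'%:Z) \/ y = x (- (n'%:Z)))].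

Lemma lam_ret i : i != 0 -> x i = x 0 -> limit_set x (x 0).
Proof.
move=> i0 xi m _; apply: subset_closure.
have shift : forall n : nat, x (i + n%:Z) = x n%:Z.
  by move=> n; rewrite -orbit_iter xi orbit_iter add0r.
have per : forall t : nat, x ((t * `|i|)%N%:Z) = x 0.
  case: (intP i) i0 xi shift => [//|p|p] _ _ sh.
  - elim=> [|t IH]; first by rewrite mul0n.
    by rewrite -IH -(sh (t * `|p.+1%:Z|)%N); congr x; lia.
  - elim=> [|t IH]; first by rewrite mul0n.
    by rewrite -(sh ((t.+1 * `|- p.+1%:Z|)%N)) -IH; congr x; lia.
exists (m * `|i|)%N; split; last by left; rewrite per.
have : (0 < `|i|)%N by lia.
by move=> ?; rewrite leq_pmulr.
Qed.
End Orbit.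

Section Iso.
Variables (T : topologicalType) (x : int -> T).
Hypothesis hT : hausdorff_space T.

Lemma closure1 (a : T) : closure [set a] = [set a].
Proof.
by apply/esym/closure_id/accessible_closed_set1/hausdorff_accessible.
Qed.

Lemma iso_step n : (0 < n)%N -> (forall i, i != 0 -> x i <> x 0) ->
  ~ closure (@Aset T x n.+1) (x 0) -> ~ closure (@Aset T x n) (x 0).
Proof.
move=> n0 ne h1 h2.
have sub : @Aset T x n `<=` @Aset T x n.+1 `|` [set x n%:Z] `|` [set x (- n%:Z)].
  move=> y [n' [nn' hy]]; have [e|nn] := eqVneq n' n.
    by subst n'; case: hy => ->; [left; right|right].
  by left; left; exists n'; split => //; lia.
have := closureS sub h2; rewrite !closureU !closure1.
case=> [[//|] h|h].
  by apply: (ne n%:Z); [lia|rewrite -h].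
by apply: (ne (- n%:Z)); [lia|rewrite -h].
Qed.

Lemma iso N : ~ closure (@Aset T x N) (x 0) -> (forall i, i != 0 -> x i <> x 0) ->
  ~ closure (@Aset T x 1) (x 0).
Proof.
move=> hN ne.
suff : forall d n, (0 < n)%N -> (N <= n + d)%N -> ~ closure (@Aset T x n) (x 0).
  by move/(_ N 1%N); apply.
elim=> [|d IH] n n0 le.
  move=> h; apply: hN; apply: closureS h => y [n' [nn' hy]].
  by exists n'; split => //; lia.
case: (leqP N n) => hn.
  move=> h; apply: hN; apply: closureS h => y [n' [nn' hy]].
  by exists n'; split => //; lia.
apply: iso_step => //; apply: IH => //; lia.
Qed.
End Iso.

Theorem proposition4p2 (R : realType) (X : metricType R) (f : X -> X)
    (x : int -> X) :
  compact [set: X] -> continuous f ->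
  full_orbit f x -> ~ limit_set x (x 0) ->
  Per_orbit f x = posnat /\ Per_hyper f = posnat.
Proof.
move=> cX fc fo nl.
have hX : hausdorff_space X by exact: metric_hausdorff.
have [N hN] : exists N, ~ closure (@Aset X x N) (x 0).
  by apply/existsNP => H; apply: nl => m _; exact: H m.
have C0 : forall k, sub_orbit_closure x k (x 0).
  by move=> k; apply: subset_closure; exists 0 => //; rewrite mul0r.
have key : forall k, (0 < k)%N -> hyper_periodic f (sub_orbit_closure x k) k.
  move=> k k0; split => //.
  - exact: closed_closure.
  - by exists (x 0).
  - rewrite iterH /sub_orbit_closure img_closure_eq //; last exact: iter_cont.
    congr closure; apply/seteqP; split.
      move=> _ [_ [m _ <-] <-]; exists (m + 1) => //.
      by rewrite (@orbit_iter _ _ _ fo) mulrDl mul1r.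
    move=> _ [m _ <-]; exists (x ((m - 1) * k%:Z)); first by exists (m - 1).
    by rewrite (@orbit_iter _ _ _ fo) mulrBl mul1r subrK.
  move=> j j0 jk e.
  have := C0 k; rewrite -e iterH => /(@img_closure _ _ _ (@iter_cont _ _ j fc)) h.
  have [[i [i0 xi]]|ne] := pselect (exists i, i != 0 /\ x i = x 0).
    by apply: nl; exact: (@lam_ret _ _ _ fo _ i0 xi).
  have ne' : forall i, i != 0 -> x i <> x 0.
    by move=> i i0 xi; apply: ne; exists i.
  apply: (@iso _ x hX N hN ne'); apply: closureS h => _ [_ [m _ <-] <-].
  rewrite (@orbit_iter _ _ _ fo).
  have nz : m * k%:Z + j%:Z != 0.
    apply/eqP => h0.
    have [m0|m0] := leP 0 m.
      have : 0 <= m * k%:Z by rewrite mulr_ge0.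
      lia.
    have : m * k%:Z <= - k%:Z.
      by rewrite -mulN1r ler_pM2r; [lia|lia].
    lia.
  move: nz; case: (m * k%:Z + j%:Z) => [n|n] nz.
    by exists n; split; [lia|left].
  by exists n.+1; split; [lia|right; rewrite NegzE].
split; apply/seteqP; split.
- by move=> k [].
- by move=> k k0; exact: key.
- by move=> k [C []].
- by move=> k k0; exists (sub_orbit_closure x k); exact: key.
Qed.
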